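(* Let $R$ be a finite group and let $\varphi$ be an automorphism of $R$ with $|R:C_R(\varphi)|=3$. Then one of the following holds: (1) $\frac14\left(|R|+|\mathbf{I}(R)|+|C_R(\varphi)|+|C_R(\varphi)^{-1}|\right)\le \mathbf{c}(R)-\frac{|R|}{96}$; (2) $R$ is abelian of exponent greater than $2$ and $\varphi=\iota$.
   Context: $\mathbf{I}(R)=\{x\in R\mid x^2=1\}$, $\mathbf{c}(R)=(|R|+|\mathbf{I}(R)|)/2$. For an automorphism $\varphi$: $C_R(\varphi)=\{x\in R\mid x^\varphi=x\}$ and $C_R(\varphi)^{-1}=\{x\in R\mid x^\varphi=x^{-1}\}$. $\iota:R\to R$ is the map $x\mapsto x^{-1}$. *)

(* Defs.v *)
From HB Require Import structures.
From mathcomp Require Import all_boot all_order all_algebra all_fingroup all_solvable.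
Set Implicit Arguments. Unset Strict Implicit. Unset Printing Implicit Defensive.

Local Open Scope group_scope.

Definition invols (gT : finGroupType) (R : {set gT}) : {set gT} :=
  [set x in R | x ^+ 2 == 1].

Definition fixC (gT : finGroupType) (phi : {perm gT}) (R : {set gT}) : {set gT} :=
  [set x in R | phi x == x].

Definition invC (gT : finGroupType) (phi : {perm gT}) (R : {set gT}) : {set gT} :=
  [set x in R | phi x == x^-1].

Definition cR (gT : finGroupType) (R : {set gT}) : rat :=
  ((#|R|%:R + #|invols R|%:R) / 2%:R)%R.

(* Main.v *)
Require Import Defs.
From HB Require Import structures.
From mathcomp Require Import all_boot all_order all_algebra all_fingroup all_solvable.
From mathcomp Require Import zify ring lra.
Set Implicit Arguments. Unset Strict Implicit. Unset Printing Implicit Defensive.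
Import GRing.Theory Num.Theory.
Local Open Scope group_scope.

Lemma half_sub (gT : finGroupType) (G K : {group gT}) :
  K \subset G -> (#|G| < 2 * #|K|)%N -> K :=: G.
Proof.
move=> sKG hc; apply: index1g => //.
have := Lagrange sKG; have := indexg_gt0 G K.
move: (#|G : K|) => k k0 hL; rewrite -hL in hc.
case: k k0 hc {hL} => [|[|k]] //= _; nia.
Qed.

Lemma aut_mul (gT : finGroupType) (R : {group gT}) (phi : {perm gT}) :
  phi \in Aut R -> {in R &, forall x y, phi (x * y) = phi x * phi y}.
Proof. by move=> /Aut_morphic /morphicP. Qed.

Lemma aut_one (gT : finGroupType) (R : {group gT}) (phi : {perm gT}) :
  phi \in Aut R -> phi 1 = 1.
Proof.
move=> hA; have := aut_mul hA (group1 R) (group1 R).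
by rewrite mulg1 => /esym/(canRL (mulKg _)); rewrite mulVg.
Qed.

Lemma aut_inv (gT : finGroupType) (R : {group gT}) (phi : {perm gT}) :
  phi \in Aut R -> {in R, forall x, phi x^-1 = (phi x)^-1}.
Proof.
move=> hA x xR; have := aut_mul hA (groupVr xR) xR.
rewrite mulVg (aut_one hA) => /esym h.
by apply: (mulIg (phi x)); rewrite h mulVg.
Qed.

Lemma ab3 (a b : nat) : (a * b = 3 -> b != 1 -> a = 1)%N.
Proof. move=> h /eqP hb; nia. Qed.
Lemma ar1 (k : nat) : (1 + (1 + k) = 3 -> k = 1)%N.
Proof. lia. Qed.
Lemma ar2 (c k s r : nat) : (15*c < 8*k -> 2*k <= s + r -> c*3 = r -> c < 2*s)%N.
Proof. lia. Qed.

Lemma coset3 (gT : finGroupType) (R C : {group gT}) (x y d : gT) :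
  C \subset R -> #|rcosets C R| = 3%N -> x \in R -> x \notin C ->
  y \in R -> y \notin C -> y * x \notin C ->
  d \in R -> d \notin C -> d * x \notin C -> y * d^-1 \in C.
Proof.
move=> sCR h3 xR xC yR yC yxC dR dC dxC.
have inP z : z \in R -> C :* z \in rcosets C R by move=> zR; apply/rcosetsP; exists z.
have eqC z w : (C :* z == C :* w) = (z * w^-1 \in C).
  apply/eqP/idP => [h|h]; first by rewrite -mem_rcoset -h rcoset_refl.
  by apply/rcoset_eqP; rewrite mem_rcoset.
set P := rcosets C R.
have hC : C :* 1 \in P by apply: inP.
have hX : C :* x^-1 \in P by apply: inP; rewrite groupV.
have nCX : C :* x^-1 != C :* 1 by rewrite eqC invg1 mulg1 groupV.
have h1 : #|P :\ (C :* 1) :\ (C :* x^-1)| = 1%N.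
  move: h3; rewrite (cardsD1 (C :* 1)%g) hC (cardsD1 (C :* x^-1) (P :\ _)).
  by rewrite !inE nCX hX /=; apply: ar1.
have mem z : z \in R -> z \notin C -> z * x \notin C ->
    C :* z \in P :\ (C :* 1) :\ (C :* x^-1).
  move=> zR zC zxC; rewrite !inE inP // andbT.
  by rewrite !eqC invg1 mulg1 invgK zC zxC.
have /card_le1_eqP hE : #|P :\ (C :* 1) :\ (C :* x^-1)| <= 1%N by rewrite h1.
by rewrite -eqC (hE _ _ (mem _ yR yC yxC) (mem _ dR dC dxC)).
Qed.


Lemma fixC_group (gT : finGroupType) (R : {group gT}) (phi : {perm gT}) :
  phi \in Aut R -> group_set (fixC phi R).
Proof.
move=> hA; apply/group_setP; split.
  by rewrite !inE group1 (aut_one hA) eqxx.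
move=> x y; rewrite !inE => /andP[xR /eqP hx] /andP[yR /eqP hy].
by rewrite groupM // (aut_mul hA xR yR) hx hy eqxx.
Qed.

Lemma invC_group (gT : finGroupType) (R : {group gT}) (phi : {perm gT}) :
  phi \in Aut R -> abelian R -> group_set (invC phi R).
Proof.
move=> hA ab; apply/group_setP; split.
  by rewrite !inE group1 (aut_one hA) invg1 eqxx.
move=> x y; rewrite !inE => /andP[xR /eqP hx] /andP[yR /eqP hy].
rewrite groupM // (aut_mul hA xR yR) hx hy invMg.
by rewrite (centsP ab _ (groupVr xR) _ (groupVr yR)) eqxx.
Qed.

Lemma inv_comm (gT : finGroupType) (R : {group gT}) (phi : {perm gT}) x y :
  phi \in Aut R -> x \in invC phi R -> y \in invC phi R -> y * x \in invC phi R ->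
  commute x y.
Proof.
move=> hA; rewrite !inE => /andP[xR /eqP hx] /andP[yR /eqP hy] /andP[_ /eqP h].
move: h; rewrite (aut_mul hA yR xR) hx hy -invMg => /invg_inj.
done.
Qed.

Lemma key (gT : finGroupType) (R C : {group gT}) (phi : {perm gT}) (x : gT) :
  phi \in Aut R -> C \subset R -> #|R : C| = 3%N ->
  (15 * #|C| < 8 * #|invC phi R :\: C|)%N ->
  x \in invC phi R :\: C -> R \subset 'C[x].
Proof.
move=> hA sCR h3 hK xK.
set J := invC phi R in hK xK *; set K := J :\: C in hK xK *.
have sJR : J \subset R by apply/subsetP => z; rewrite inE => /andP[].
have sKR : K \subset R by apply: subset_trans (subsetDl _ _) sJR.
have xR : x \in R by apply: (subsetP sKR).
have xC : x \notin C by move: xK; rewrite inE => /andP[].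
set S := K :&: (K :* x^-1).
have memS y : (y \in S) = (y \in K) && (y * x \in K) by rewrite inE mem_rcoset invgK.
have cardS : (2 * #|K| <= #|S| + #|R|)%N.
  have := cardsUI K (K :* x^-1); rewrite card_rcoset.
  have : #|K :|: K :* x^-1| <= #|R|.
    apply: subset_leq_card; rewrite subUset sKR /=.
    apply/subsetP => z; rewrite mem_rcoset invgK => /(subsetP sKR) h.
    by rewrite -[z](mulgK x) groupM ?groupV.
  rewrite /S; lia.
have hLag := Lagrange sCR; rewrite h3 in hLag.
have S0 : (0 < #|S|)%N by lia.
have [d dS] : exists d, d \in S by apply/set0Pn; rewrite -card_gt0.
set H := 'C_R[x].
have sSH : S \subset H.
  apply/subsetP => y; rewrite memS => /andP[yK yxK].
  have yR : y \in R by apply: (subsetP sKR).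
  rewrite in_setI yR /=; apply/cent1P; apply: esym.
  apply: (inv_comm (R:=R) (phi:=phi) (x:=x) (y:=y) hA).
  - by move: xK; rewrite inE => /andP[].
  - by move: yK; rewrite inE => /andP[].
  - by move: yxK; rewrite inE => /andP[].
have inKC y : y \in K -> (y \notin C) && (y \in R).
  by move=> yK; move: (yK); rewrite inE => /andP[-> _]; exact: (subsetP sKR).
have sT : S :* d^-1 \subset H :&: C.
  apply/subsetP => z; rewrite mem_rcoset invgK => zdS.
  have zH : z \in H by rewrite -[z](mulgK d) groupM ?groupV ?(subsetP sSH).
  rewrite inE zH /=.
  move: zdS dS; rewrite !memS => /andP[/inKC/andP[yC yR] /inKC/andP[yxC _]].
  move=> /andP[/inKC/andP[dC dR] /inKC/andP[dxC _]].
  by have := coset3 sCR h3 xR xC yR yC yxC dR dC dxC; rewrite mulgK.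
have sHC : (H :&: C)%G \subset C by apply: subsetIr.
have eHC : H :&: C = C.
  apply: (half_sub sHC) => /=.
  have h2 := subset_leq_card sT; rewrite card_rcoset in h2.
  have h4 : (#|C| < 2 * #|S|)%N by apply: (ar2 hK cardS hLag).
  by apply: (leq_trans h4); rewrite leq_mul2l; apply/orP; right; exact: h2.
have sCH : C \subset H by rewrite -eHC subsetIl.
have sHR : H \subset R by apply: subsetIl.
have hLI := Lagrange_index sHR sCH; rewrite h3 in hLI.
have hHC : #|H : C| != 1%N.
  apply/eqP => /(index1g sCH) eCH.
  by move: xC; rewrite eCH inE xR /=; apply/negP/negPn/cent1P.
have hRH : #|R : H| = 1%N.
  exact: (ab3 hLI hHC).
rewrite -(index1g sHR hRH); exact: subsetIr.
Qed.

Lemma ar4 (c i j k : nat) : (15 * c + 8 * i < 8 * j -> j <= i + k -> 15 * c < 8 * k)%N.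
Proof. lia. Qed.
Lemma ar5 (c k n : nat) : (15 * c < 8 * k -> c * 3 = n -> n < 2 * k)%N.
Proof. lia. Qed.
Lemma ar6 (c i j n : nat) : (15 * c + 8 * i < 8 * j -> n <= i -> j <= n -> False)%N.
Proof. lia. Qed.

Lemma ar3 (n i c j : rat) : (n = c * 3 ->
  (n + i) / 2 - n / 96 < (n + i + c + j) / 4 -> 15 * c + 8 * i < 8 * j)%R.
Proof. move=> hn h; lra. Qed.

Local Close Scope group_scope.

Theorem lemma2p3 (gT : finGroupType) (R : {group gT}) (phi : {perm gT})
  (hphi : phi \in Aut R)
  (hidx : #|R : fixC phi R|%g = 3%N) :
  (((#|R|%:R + #|invols R|%:R + #|fixC phi R|%:R + #|invC phi R|%:R) / 4%:R
     <= cR R - #|R|%:R / 96%:R :> rat)%R)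
  \/ (abelian R /\ (2 < exponent R)%N /\ {in R, forall x, phi x = x^-1%g}).
Proof.
set CG := Group (fixC_group hphi).
have sCR : CG \subset R by apply/subsetP => z; rewrite inE => /andP[].
have hLag := Lagrange sCR; rewrite hidx /= in hLag.
have c0 : (0 < #|fixC phi R|)%N by apply: (cardG_gt0 CG).
set c := #|fixC phi R| in hLag c0 *.
set n := #|R| in hLag *.
set i := #|invols R|.
set j := #|invC phi R|.
case: (lerP ((n%:R + i%:R + c%:R + j%:R) / 4%:R) (cR R - n%:R / 96%:R))%R => h;
  [by left | right].
have hn : (n%:R = c%:R * 3%:R :> rat)%R by rewrite -natrM hLag.
have hnat : (15 * c + 8 * i < 8 * j)%N.
  rewrite -(ltr_nat rat) natrD !natrM.
  move: h; rewrite /cR -/n -/i; exact: ar3.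
have hJC : (j <= i + #|invC phi R :\: fixC phi R|)%N.
  rewrite /j -(cardsID (fixC phi R) (invC phi R)) leq_add2r.
  apply: subset_leq_card; apply/subsetP => x; rewrite !inE.
  move=> /andP[/andP[xR /eqP h1] /andP[_ /eqP h2]].
  by rewrite xR /= expgS expg1 -{2}h2 h1 mulgV eqxx.
set K := invC phi R :\: fixC phi R in hJC *.
have hK : (15 * #|CG| < 8 * #|K|)%N by apply: (ar4 hnat hJC).
have hkey x : x \in K -> R \subset 'C[x]%g := key hphi sCR hidx hK.
have sKR : K \subset R.
  by apply/subsetP => x; rewrite !inE => /andP[_ /andP[]].
have sKZ : K \subset 'Z(R)%g.
  apply/subsetP => x xK; rewrite /center in_setI -sub_cent1 hkey // andbT.
  exact: (subsetP sKR).
have hR2 : (#|R| < 2 * #|K|)%N by apply: (ar5 hK hLag).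
have ab : abelian R.
  apply/center_idP; apply: (half_sub (center_sub R)).
  apply: (leq_trans hR2); rewrite leq_mul2l; apply/orP; right.
  exact: subset_leq_card sKZ.
set JG := Group (invC_group hphi ab).
have sJR : JG \subset R by apply/subsetP => z; rewrite inE => /andP[].
have eJ : invC phi R = R.
  apply: (half_sub sJR).
  apply: (leq_trans hR2); rewrite leq_mul2l; apply/orP; right.
  exact: subset_leq_card (subsetDl _ _).
split; first exact: ab.
split; last first.
  by move=> x; rewrite -{1}eJ inE => /andP[_ /eqP].
rewrite ltnNge; apply/negP => he.
apply: (ar6 hnat (n := n)).
  apply: subset_leq_card; apply/subsetP => x xR; rewrite inE xR /=.
  have := expg_exponent xR; have := exponent_gt0 R.
  case: (exponent R) he => [|[|[|e]]] //= _ _; last by move=> ->.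
  by rewrite expg1 => ->; rewrite expg1n.
by rewrite /j eJ.
Qed.
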